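(* Let $m$ be even, let $C=\{c_1,\dots,c_m\}$ with axis $c_1\lhd\dots\lhd c_m$, and let $v$ be a random vote sampled from the Conitzer distribution $\mathcal{D}_{\mathrm{SP}}^{\mathrm{Con}}$ for this axis. For $j\in[m/2]$ and $i\in[m]$: \[\mathbb{P}[\mathrm{pos}_v(c_j)=i]=\begin{cases}2/(2m) & \text{if } i<j,\\ (j+1)/(2m) & \text{if } i=j,\\ 1/(2m) & \text{if } j<i<m-j+1,\\ (m-j+1)/(2m) & \text{if } i=m-j+1,\\ 0 & \text{if } i>m-j+1.\end{cases}\] Further, for each $j\in[m]$ and each $i\in[m]$, $\mathbb{P}[\mathrm{pos}_v(c_j)=i]=\mathbb{P}[\mathrm{pos}_v(c_{m-j+1})=i]$.
   Context: A vote over $C$ is a total order on $C$; $\mathrm{pos}_v(c)$ is the position of $c$ in $v$ (top position is 1). The Conitzer (random peak) distribution for the axis $c_1\lhd\dots\lhd c_m$ generates a vote as follows: pick a candidate uniformly at random and rank it first; then in each of $m-1$ iterations, the already selected candidates form an interval $\{c_a,\dots,c_b\}$ of the axis, and one chooses uniformly at random among the candidates $c_{a-1}$ and $c_{b+1}$ that exist (if only one exists it is chosen with probability 1) and places it in the highest still-available position. *)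

(* Defs.v *)
From HB Require Import structures.
From mathcomp Require Import all_boot all_order all_algebra all_fingroup.
Set Implicit Arguments. Unset Strict Implicit. Unset Printing Implicit Defensive.
Import Order.TTheory GRing.Theory Num.Theory.
Local Open Scope ring_scope.

(* Candidates c_1,...,c_m are encoded 0-indexed as 0,...,m-1, with the axis
   order c_1 < ... < c_m being the natural order on indices.
   A vote is a permutation v : 'I_m -> 'I_m, where v k is the candidate in
   position k+1 (position 0 is the top). *)

(* Probability weight of the remaining choices [s] of the Conitzer process,
   given that the already selected candidates form the interval [a, b]
   (inclusive, 0-indexed). *)
Fixpoint con_ext (m a b : nat) (s : seq nat) : rat :=
  match s with
  | [::] => 1
  | x :: s' =>
      let lft := (0 < a)%N in
      let rgt := (b.+1 < m)%N in
      if lft && (x == a.-1) then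
        (if rgt then 2^-1 else 1) * con_ext m a.-1 b s'
      else if rgt && (x == b.+1) then
        (if lft then 2^-1 else 1) * con_ext m a b.+1 s'
      else 0
  end.

(* Probability that the Conitzer process produces the ranking [s]
   (top candidate first). The first candidate is uniform among the m. *)
Definition con_prob (m : nat) (s : seq nat) : rat :=
  match s with
  | [::] => 0
  | x :: s' => if (x < m)%N then (m%:R)^-1 * con_ext m x x s' else 0
  end.

Definition vote_seq (m : nat) (v : {perm 'I_m}) : seq nat :=
  [seq val (v k) | k <- enum 'I_m].

(* P[pos_v(c_j) = i] for 1-indexed j and i. *)
Definition prob_pos (m j i : nat) : rat :=
  \sum_(v : {perm 'I_m} |
         [exists k : 'I_m, (val k == i.-1) && (val (v k) == j.-1)])
     con_prob m (vote_seq v).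

(* Main.v *)
Require Import Defs.
From mathcomp Require Import all_boot all_order all_algebra all_fingroup.
From mathcomp Require Import zify ring lra.
Import GRing.Theory Num.Theory.
Local Open Scope ring_scope.

Fixpoint all_seqs (m n : nat) : seq (seq nat) :=
  if n is n'.+1 then [seq x :: s | x <- iota 0 m, s <- all_seqs m n'] else [:: [::]].

Lemma sum_all_seqsS m n (F : seq nat -> rat) :
  \sum_(s <- all_seqs m n.+1) F s = \sum_(0 <= x < m) \sum_(s <- all_seqs m n) F (x :: s).
Proof.
rewrite /= big_allpairs_dep /index_iota subn0 //.
Qed.

Lemma sum_all_seqs0 m (F : seq nat -> rat) :
  \sum_(s <- all_seqs m 0) F s = F [::].
Proof. by rewrite /= big_seq1. Qed.

Lemma sum_all_seqs_cat m n1 n2 (F : seq nat -> rat) :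
  \sum_(s <- all_seqs m (n1 + n2)) F s =
  \sum_(p <- all_seqs m n1) \sum_(r <- all_seqs m n2) F (p ++ r).
Proof.
elim: n1 F => [|n1 IH] F; first by rewrite add0n sum_all_seqs0.
rewrite addSn !sum_all_seqsS; apply: eq_bigr => x _; exact: IH.
Qed.

Lemma mem_all_seqs m n s :
  (s \in all_seqs m n) = (size s == n) && all (fun x => (x < m)%N) s.
Proof.
elim: n s => [|n IH] [|x s] //=.
  by apply/allpairsP => [[[y t] [_ _]]].
  apply/allpairsP/idP => [[[y t] [/= Hy Ht [-> ->]]]|].
    move: Ht; rewrite IH /= => /andP[/eqP -> ->]; move: Hy; rewrite mem_iota /= => ->; by rewrite eqxx.
  move=> /and3P[Hs Hx Ha]; exists (x, s) => /=; split => //.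
    by rewrite mem_iota.
  by rewrite IH Ha andbT -eqSS.
Qed.

Lemma uniq_all_seqs m n : uniq (all_seqs m n).
Proof.
elim: n => [|n IH] //=.
apply: allpairs_uniq => //; first exact: iota_uniq.
by move=> [x s] [y t] _ _ /= [-> ->].
Qed.

Lemma vote_seq_nth m (v : {perm 'I_m}) (k : 'I_m) :
  nth 0%N (vote_seq v) k = val (v k).
Proof. by rewrite /vote_seq (nth_map k) ?size_enum_ord ?ltn_ord // nth_ord_enum. Qed.

Lemma size_vote_seq m (v : {perm 'I_m}) : size (vote_seq v) = m.
Proof. by rewrite /vote_seq size_map size_enum_ord. Qed.

Lemma vote_seq_inj m : injective (@vote_seq m).
Proof.
move=> v w E; apply/permP => k; apply: val_inj.
by rewrite -!vote_seq_nth E.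
Qed.

Lemma mem_vote_seq m s :
  (s \in filter uniq (all_seqs m m)) = (s \in map (@vote_seq m) (enum {perm 'I_m})).
Proof.
rewrite mem_filter mem_all_seqs; apply/idP/idP.
  move=> /and3P[Hu /eqP Hs Ha].
  have Hlt : forall k : 'I_m, (nth 0%N s k < m)%N.
    by move=> k; move/all_nthP: Ha; apply; rewrite Hs ltn_ord.
  pose f := fun k : 'I_m => insubd k (nth 0%N s k) : 'I_m.
  have Hf : forall k, val (f k) = nth 0%N s k by move=> k; rewrite val_insubd Hlt.
  have finj : injective f.
    move=> k1 k2 /(congr1 val); rewrite !Hf => /eqP.
    by rewrite nth_uniq ?Hs ?ltn_ord // => /eqP /val_inj.
  apply/mapP; exists (perm finj); first by rewrite mem_enum.
  apply: (@eq_from_nth _ 0%N); first by rewrite size_vote_seq.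
  move=> i; rewrite Hs => Hi.
  by rewrite (vote_seq_nth _ (perm finj) (Ordinal Hi)) permE Hf.
move=> /mapP[v _ ->]; rewrite size_vote_seq eqxx /=; apply/andP; split.
  rewrite /vote_seq map_inj_uniq ?enum_uniq //.
  by move=> a b /val_inj /perm_inj.
by apply/allP => x /mapP[k _ ->]; exact: ltn_ord.
Qed.

Lemma sum_perm_seq m (F : seq nat -> rat) : (forall s, ~~ uniq s -> F s = 0) ->
  \sum_(v : {perm 'I_m}) F (vote_seq v) = \sum_(s <- all_seqs m m) F s.
Proof.
move=> HF.
have -> : \sum_(s <- all_seqs m m) F s = \sum_(s <- filter uniq (all_seqs m m)) F s.
  rewrite big_filter [RHS]big_mkcond /=; apply: eq_bigr => s _; by case: ifP => // /negbT /HF ->.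
have P : perm_eq (filter uniq (all_seqs m m)) (map (@vote_seq m) (enum {perm 'I_m})).
  apply: uniq_perm; first by rewrite filter_uniq // uniq_all_seqs.
    by rewrite map_inj_uniq ?enum_uniq //; exact: vote_seq_inj.
  exact: mem_vote_seq.
rewrite (perm_big _ P) big_map big_enum /=.
by apply: eq_bigl.
Qed.

Definition st1 (ab : nat * nat) (x : nat) : nat * nat :=
  if (0 < ab.1)%N && (x == ab.1.-1) then (ab.1.-1, ab.2) else (ab.1, ab.2.+1).
Definition st (ab : nat * nat) (p : seq nat) := foldl st1 ab p.
Definition w m (ab : nat * nat) (x : nat) : rat := con_ext m ab.1 ab.2 [:: x].

Lemma con_ext_cons m ab x s :
  con_ext m ab.1 ab.2 (x :: s) = w m ab x * con_ext m (st1 ab x).1 (st1 ab x).2 s.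
Proof.
case: ab => a b; rewrite /w /st1 /=.
case: ifP => _; first by rewrite mulr1.
by case: ifP => _; rewrite ?mulr1 ?mul0r.
Qed.

Lemma con_ext_cat m ab p r :
  con_ext m ab.1 ab.2 (p ++ r) =
  con_ext m ab.1 ab.2 p * con_ext m (st ab p).1 (st ab p).2 r.
Proof.
elim: p ab => [|x p IH] ab; first by rewrite /= mul1r.
by rewrite cat_cons !con_ext_cons IH mulrA.
Qed.

Lemma con_ext_rcons m ab p y :
  con_ext m ab.1 ab.2 (rcons p y) = con_ext m ab.1 ab.2 p * w m (st ab p) y.
Proof. by rewrite -cats1 con_ext_cat. Qed.

Lemma st_rcons ab p y : st ab (rcons p y) = st1 (st ab p) y.
Proof. by rewrite /st foldl_rcons. Qed.

Lemma w_split m ab x : (ab.1 <= ab.2)%N ->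
  w m ab x =
  (if x == ab.1.-1 then (if (0 < ab.1)%N then (if (ab.2.+1 < m)%N then 2^-1 else 1) else 0) else 0)
  + (if x == ab.2.+1 then (if (ab.2.+1 < m)%N then (if (0 < ab.1)%N then 2^-1 else 1) else 0) else 0).
Proof.
case: ab => a b /= Hab; rewrite /w /= !mulr1.
case: (x =P a.-1) => [E1|E1]; case: (x =P b.+1) => [E2|E2]; try lia;
  by rewrite ?andbT ?andbF ?addr0 ?add0r.
Qed.

Lemma sum_if_eq n t (F : nat -> rat) :
  \sum_(0 <= x < n) (if x == t then F x else 0) = if (t < n)%N then F t else 0.
Proof.
elim: n => [|n IH]; first by rewrite big_geq.
rewrite big_nat_recr //= IH.
case: (ltngtP t n) => H.
- by rewrite ltnS ltnW // addr0.
- by rewrite ltnS leqNgt H addr0.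
- by rewrite H ltnSn add0r.
Qed.

Lemma sum_w m ab : (ab.1 <= ab.2 < m)%N -> ((0 < ab.1) || (ab.2.+1 < m))%N ->
  \sum_(0 <= x < m) w m ab x = 1.
Proof.
case: ab => a b /= /andP[Hab Hbm] Hne.
rewrite (eq_bigr _ (fun x _ => w_split m (a, b) x Hab)) big_split /= !sum_if_eq.
have -> : (a.-1 < m)%N by lia.
case: (ltnP 0 a) => Ha; case: (ltnP b.+1 m) => Hb /=; try lia.
- rewrite -[1 in RHS](@divff _ 2) //; lra.
- by rewrite addr0.
- by rewrite add0r.
Qed.

Lemma w_st1 m ab x : (ab.1 <= ab.2 < m)%N -> w m ab x != 0 ->
  ((st1 ab x).1 <= (st1 ab x).2 < m)%N /\ ((st1 ab x).2 - (st1 ab x).1 = (ab.2 - ab.1).+1)%N.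
Proof.
case: ab => a b /=; rewrite /w /st1 /= => Hab.
case E: ((0 < a)%N && (x == a.-1)) => /= Hw.
  move/andP: E => [H1 /eqP H2]; lia.
move: Hw; case E2: ((b.+1 < m)%N && (x == b.+1)) => /= Hw.
  move/andP: E2 => [H3 /eqP H4]; lia.
by [].
Qed.

Lemma st_valid m ab p : (ab.1 <= ab.2 < m)%N -> con_ext m ab.1 ab.2 p != 0 ->
  ((st ab p).1 <= (st ab p).2 < m)%N /\ ((st ab p).2 - (st ab p).1 = ab.2 - ab.1 + size p)%N.
Proof.
elim: p ab => [|x p IH] ab H; first by rewrite /= addn0.
rewrite con_ext_cons mulf_eq0 negb_or => /andP[Hw Hc].
have [H1 H2] := w_st1 _ _ _ H Hw.
have [H3 H4] := IH _ H1 Hc.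
split => //; rewrite /= H4 H2; lia.
Qed.

Lemma tot m n ab : (ab.1 <= ab.2 < m)%N -> (n + (ab.2 - ab.1).+1 = m)%N ->
  \sum_(s <- all_seqs m n) con_ext m ab.1 ab.2 s = 1.
Proof.
elim: n ab => [|n IH] ab H Hn; first by rewrite sum_all_seqs0.
rewrite sum_all_seqsS -(sum_w _ _ H); last by case: ab H Hn => a b /=; lia.
apply: eq_bigr => x _.
rewrite (eq_bigr _ (fun s _ => con_ext_cons m ab x s)) -big_distrr /=.
have [->|Hw] := eqVneq (w m ab x) 0; first by rewrite mul0r.
have [H1 H2] := w_st1 _ _ _ H Hw.
by rewrite IH ?mulr1 // H2 -Hn addnS.
Qed.

Lemma con_uniq m ab s : (ab.1 <= ab.2)%N -> con_ext m ab.1 ab.2 s != 0 ->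
  uniq s && all (fun y => (y < ab.1) || (ab.2 < y))%N s.
Proof.
elim: s ab => [|x s IH] ab // Hab.
rewrite con_ext_cons mulf_eq0 negb_or => /andP[Hw Hc].
case: ab Hab Hw Hc => a b /= Hab; rewrite /w /st1 /=.
case: ifP => [/andP[H1 /eqP H2]|H1] /=.
  move=> _ Hc; have /andP[Hu Ha] := IH (a.-1, b) ltac:(simpl; lia) Hc; rewrite Hu andbT; apply/and3P; split.
  - by apply/negP => /(allP Ha) /=; lia.
  - lia.
  - by apply/allP => y /(allP Ha) /=; lia.
case: ifP => [/andP[H3 /eqP H4]|H3] /=; last by [].
move=> _ Hc; have /andP[Hu Ha] := IH (a, b.+1) ltac:(simpl; lia) Hc; rewrite Hu andbT; apply/and3P; split.
- by apply/negP => /(allP Ha) /=; lia.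
- lia.
- by apply/allP => y /(allP Ha) /=; lia.
Qed.

Definition Phi m k (g : nat * nat -> rat) :=
  \sum_(0 <= x < m) \sum_(p <- all_seqs m k) con_ext m x x p * g (st (x, x) p).

Lemma Phi_step m k g :
  Phi m k.+1 g = Phi m k (fun ab => \sum_(0 <= y < m) w m ab y * g (st1 ab y)).
Proof.
rewrite /Phi; apply: eq_bigr => x _.
rewrite -addn1 sum_all_seqs_cat; apply: eq_bigr => p _.
rewrite sum_all_seqsS big_distrr; apply: eq_bigr => y _ /=.
rewrite big_seq1 cats1 st_rcons mulrA.
by have := con_ext_rcons m (x, x) p y => /= ->.
Qed.

Lemma gpp m ab g : (ab.1 <= ab.2 < m)%N ->
  \sum_(0 <= y < m) w m ab y * g (st1 ab y) =
  (if (0 < ab.1)%N then (if (ab.2.+1 < m)%N then 2^-1 else 1) * g (ab.1.-1, ab.2) else 0)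
  + (if (ab.2.+1 < m)%N then (if (0 < ab.1)%N then 2^-1 else 1) * g (ab.1, ab.2.+1) else 0).
Proof.
case: ab => a b /= /andP[Hab Hbm].
under eq_bigr => y _ do rewrite (w_split m (a, b) y Hab) mulrDl.
rewrite big_split /=.
rewrite (eq_bigr (fun y => if y == a.-1 then
   (if (0 < a)%N then (if (b.+1 < m)%N then 2^-1 else 1) else 0) * g (st1 (a, b) a.-1) else 0));
  last by move=> y _; case: eqP => [->|_]; rewrite ?mul0r.
rewrite [X in _ + X](eq_bigr (fun y => if y == b.+1 then
   (if (b.+1 < m)%N then (if (0 < a)%N then 2^-1 else 1) else 0) * g (st1 (a, b) b.+1) else 0));
  last by move=> y _; case: eqP => [->|_]; rewrite ?mul0r.
rewrite !sum_if_eq.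
have -> : (a.-1 < m)%N by lia.
rewrite /st1 /=.
have -> : (b.+1 == a.-1) = false by apply/eqP; lia.
rewrite andbF.
rewrite eqxx andbT; case: (0 < a)%N; case: (b.+1 < m)%N; by rewrite ?mul0r ?add0r ?addr0.

Qed.

Lemma Phi_formula m k g : (k.+2 <= m)%N ->
  Phi m k g = \sum_(0 <= a < m - k) g (a, a + k)%N
              + k%:R / 2 * (g (0, k)%N + g (m - k.+1, m - k.+1 + k)%N).
Proof.
elim: k g => [|k IH] g Hk.
  rewrite /Phi subn0 mul0r addr0; apply: eq_bigr => x _.
  by rewrite sum_all_seqs0 /= mul1r addn0.
rewrite Phi_step IH; last lia.
set n := (m - k.+1)%N.
have Hn : (2 <= n)%N by rewrite /n; lia.
have Hmk : (m - k = n.+1)%N by rewrite /n; lia.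
set G := fun a => g (a, a + k.+1)%N.
have Hpt : forall a, (0 <= a < n.+1)%N ->
   (\sum_(0 <= y < m) w m (a, a + k)%N y * g (st1 (a, a + k)%N y)) =
   (if (0 < a)%N then (if (a < n)%N then 2^-1 else 1) * G a.-1 else 0)
   + (if (a < n)%N then (if (0 < a)%N then 2^-1 else 1) * G a else 0).
  move=> a Ha; rewrite gpp /=; last by rewrite /n in Ha; lia.
  have -> : ((a + k).+1 < m)%N = (a < n)%N by apply/idP/idP; rewrite /n; lia.
  rewrite /G !addnS.
  case: (ltnP 0 a) => Ha0 //.
  by have -> : ((a.-1 + k).+1 = a + k)%N by lia.
rewrite Hmk (eq_big_nat _ _ Hpt) big_split /=.
rewrite big_nat_recl // big_nat_recr //= ltnn addr0 add0r.
rewrite -big_split /=.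
rewrite (eq_big_nat _ _ (F2 := fun i => G i + (if i == 0%N then G i / 2 else 0)
                                   + (if i == n.-1 then G i / 2 else 0))); last first.
  move=> i /andP[_ Hi]; rewrite Hi.
  case: (i =P 0%N) => [Ei|Ei]; case: (i =P n.-1) => [Ej|Ej]; try lia.
  - have -> : (i.+1 < n)%N by lia.
    have -> : (0 < i)%N = false by apply/negbTE; lia.
    lra.
  - have -> : (i.+1 < n)%N = false by apply/negbTE; lia.
    have -> : (0 < i)%N by lia.
    lra.
  - have -> : (i.+1 < n)%N by lia.
    have -> : (0 < i)%N by lia.
    lra.
rewrite !big_split /= !sum_if_eq.
have -> : (0 < n)%N by lia.
have -> : (n.-1 < n)%N by lia.
have := Hpt 0%N ltac:(lia); rewrite add0n => ->.
have := Hpt n ltac:(lia); rewrite ltnn => ->.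
have -> : (0 < n)%N by lia.
have -> : (m - k.+2 = n.-1)%N by rewrite /n; lia.
rewrite /= ?mul0r ?add0r ?addr0 ?mul1r.
have -> : g (0%N, k.+1) = G 0%N by [].
have -> : g (n.-1, (n.-1 + k.+1)%N) = G n.-1 by [].
rewrite -natr1; lra.
Qed.

Lemma con_prob_uniq m s : ~~ uniq s -> con_prob m s = 0.
Proof.
case: s => [|x s] //= Hu.
case: ifP => // Hx.
have [->|Hc] := eqVneq (con_ext m x x s) 0; first by rewrite mulr0.
have /andP[Hus Ha] := con_uniq m (x, x) s (leqnn x) Hc.
exfalso; move: Hu; rewrite Hus andbT negbK => /(allP Ha) /=; lia.
Qed.

Lemma prob_seq m j i : (1 <= i <= m)%N ->
  prob_pos m j i = \sum_(s <- all_seqs m m) con_prob m s * (nth 0%N s i.-1 == j.-1)%:R.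
Proof.
move=> Hi; rewrite /prob_pos big_mkcond /=.
rewrite -(sum_perm_seq m (fun s => con_prob m s * (nth 0%N s i.-1 == j.-1)%:R)); last first.
  by move=> s /con_prob_uniq ->; rewrite mul0r.
apply: eq_bigr => v _.
have -> : [exists k : 'I_m, (val k == i.-1) && (val (v k) == j.-1)] =
          (nth 0%N (vote_seq v) i.-1 == j.-1).
  apply/existsP/idP => [[k /andP[/eqP <- /eqP <-]]|H]; first by rewrite vote_seq_nth.
  have Hi' : (i.-1 < m)%N by lia.
  exists (Ordinal Hi'); rewrite eqxx /=.
  by rewrite -(vote_seq_nth _ v (Ordinal Hi')).
by case: ifP; rewrite ?mulr1 ?mulr0.
Qed.

Lemma prob_start m j i : (1 <= i <= m)%N ->
  prob_pos m j i = m%:R^-1 * \sum_(0 <= x < m) \sum_(s <- all_seqs m m.-1)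
                     con_ext m x x s * (nth 0%N (x :: s) i.-1 == j.-1)%:R.
Proof.
move=> Hi; rewrite prob_seq //.
case: m Hi => [|m] Hi; first by lia.
rewrite sum_all_seqsS big_distrr /=; apply: eq_big_nat => x /andP[_ Hx].
rewrite big_distrr; apply: eq_bigr => s _ /=.
by rewrite Hx mulrA.
Qed.

Lemma P_1 m c : (c < m)%N -> prob_pos m c.+1 1 = m%:R^-1.
Proof.
move=> Hc; rewrite prob_start /=; last by lia.
rewrite -[RHS]mulr1; congr (_ * _).
rewrite (eq_bigr (fun x => if x == c then \sum_(s <- all_seqs m m.-1) con_ext m x x s else 0)); last first.
  move=> x _; case: eqP => [->|_]; last by rewrite big1 // => s _; rewrite mulr0.
  by apply: eq_bigr => s _; rewrite ?eqxx mulr1.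
rewrite sum_if_eq Hc.
by have := tot m m.-1 (c, c) => /= -> //; [rewrite leqnn | lia].
Qed.

Lemma P_Phi m c k : (c < m)%N -> (k.+2 <= m)%N ->
  prob_pos m c.+1 k.+2 = m%:R^-1 * Phi m k (fun ab => w m ab c).
Proof.
move=> Hc Hk; rewrite prob_start /=; last by lia.
congr (_ * _); rewrite /Phi; apply: eq_big_nat => x /andP[_ Hx].
have -> : (m.-1 = k + (m - k.+2).+1)%N by lia.
rewrite sum_all_seqs_cat big_seq [RHS]big_seq; apply: eq_bigr => p.
rewrite mem_all_seqs => /andP[/eqP Hp _].
rewrite sum_all_seqsS.
rewrite (eq_bigr (fun y => if y == c then con_ext m x x p * w m (st (x,x) p) c else 0)).
  by rewrite sum_if_eq Hc.
move=> y _.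
have Hcat : forall r, con_ext m x x (p ++ y :: r) = con_ext m x x p *
    (w m (st (x,x) p) y * con_ext m (st1 (st (x,x) p) y).1 (st1 (st (x,x) p) y).2 r).
  by move=> r; rewrite (con_ext_cat m (x,x)) con_ext_cons.
under eq_bigr => r _ do rewrite Hcat nth_cat Hp ltnn subnn /=.
have [HA|HA] := eqVneq (con_ext m x x p) 0.
  rewrite big1; last by move=> r _; rewrite HA !mul0r.
  by case: eqP => _ //; rewrite HA mul0r.
have [HB|HB] := eqVneq (w m (st (x,x) p) y) 0.
  rewrite big1; last by move=> r _; rewrite HB mul0r mulr0 mul0r.
  by case: eqP => [E|_] //; rewrite -E HB mulr0.
have [H1 H2] := st_valid m (x,x) p ltac:(rewrite /= leqnn; lia) HA.
have [H3 H4] := w_st1 _ _ _ H1 HB.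
have T := tot m (m - k.+2) _ H3 ltac:(rewrite H4 H2 /= Hp; lia).
rewrite -big_distrl /= -big_distrr /= -big_distrr /=. rewrite T.
by case: eqP => [->|_]; rewrite ?mulr1 ?mulr0.
Qed.

Lemma wsum m k c : (k.+2 <= m)%N -> (c < m)%N ->
  \sum_(0 <= a < m - k) w m (a, a + k)%N c =
  (if (c.+1 < m - k)%N then (if ((c.+1 + k).+1 < m)%N then 2^-1 else 1) else 0)
  + (if (k.+1 <= c)%N then (if (0 < c - k.+1)%N then 2^-1 else 1) else 0).
Proof.
move=> Hk Hc.
rewrite (eq_big_nat _ _ (F2 := fun a =>
   (if a == c.+1 then (if ((c.+1 + k).+1 < m)%N then 2^-1 else 1) else 0)
 + (if a == (c - k.+1)%N then (if (k.+1 <= c)%N then (if (0 < c - k.+1)%N then 2^-1 else 1) else 0) else 0))); last first.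
  move=> a /andP[_ Ha]; rewrite w_split /=; last by lia.
  congr (_ + _).
    case: (a =P c.+1) => [->|Ea]; first by rewrite eqxx.
    case: (c =P a.-1) => [Eb|Eb] //; case: (ltnP 0 a) => // Ha0; lia.
  case: (a =P (c - k.+1)%N) => [Ea|Ea].
    case: (c =P (a + k).+1) => [Eb|Eb].
      have -> : ((a + k).+1 < m)%N by lia.
      have -> : (k.+1 <= c)%N by lia.
      by rewrite Ea.
    case: (leqP k.+1 c) => // Hkc; lia.
  case: (c =P (a + k).+1) => [Eb|Eb] //; lia.
rewrite big_split /= !sum_if_eq.
case: (leqP k.+1 c) => Hkc; last by rewrite if_same.
by have -> : (c - k.+1 < m - k)%N by lia.
Qed.

Lemma wb0 m k c : (k.+2 <= m)%N -> w m (0, k)%N c = if c == k.+1 then 1 else 0.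
Proof.
move=> Hk; rewrite w_split //= if_same add0r.
by have -> : (k.+1 < m)%N by lia.
Qed.

Lemma wb1 m k c : (k.+2 <= m)%N ->
  w m (m - k.+1, m - k.+1 + k)%N c = if c == (m - k.+2)%N then 1 else 0.
Proof.
move=> Hk; rewrite w_split /=; last by lia.
have -> : ((m - k.+1 + k).+1 < m)%N = false by apply/negbTE; lia.
have -> : (0 < m - k.+1)%N by lia.
have -> : ((m - k.+1).-1 = m - k.+2)%N by lia.
by rewrite if_same addr0.
Qed.

Definition Pform m k c : rat :=
  m%:R^-1 * ((if (c.+1 < m - k)%N then (if ((c.+1 + k).+1 < m)%N then 2^-1 else 1) else 0)
  + (if (k.+1 <= c)%N then (if (0 < c - k.+1)%N then 2^-1 else 1) else 0)
  + k%:R / 2 * ((if c == k.+1 then 1 else 0) + (if c == (m - k.+2)%N then 1 else 0))).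

Lemma P_form m c k : (c < m)%N -> (k.+2 <= m)%N -> prob_pos m c.+1 k.+2 = Pform m k c.
Proof.
move=> Hc Hk; rewrite P_Phi // Phi_formula // wsum // wb0 // wb1 //.
Qed.

Ltac dec := repeat (match goal with
 | |- context [if ?b then _ else _] =>
   first [ have -> : b = true by apply/idP; lia
         | have -> : b = false by apply/negbTE/negP; lia ] end).

Ltac splitall := dec; first [ match goal with |- context [if ?b then _ else _] =>
   let H := fresh "H" in case H: b; splitall end | idtac ].

Theorem theorem4 (m : nat) :
  ~~ odd m ->
  (forall j i : nat, (1 <= j <= m %/ 2)%N -> (1 <= i <= m)%N ->
     prob_pos m j i =
       (if (i < j)%N then 2%:R / (2 * m)%:R
        else if i == j then (j + 1)%:R / (2 * m)%:R
        else if (i < m - j + 1)%N then 1 / (2 * m)%:R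
        else if i == (m - j + 1)%N then (m - j + 1)%:R / (2 * m)%:R
        else 0))
  /\
  (forall j i : nat, (1 <= j <= m)%N -> (1 <= i <= m)%N ->
     prob_pos m j i = prob_pos m (m - j + 1) i).
Proof.
move=> Hodd.
have Hm2 : (m %/ 2 * 2 = m)%N by rewrite divnK // dvdn2.
set h := (m %/ 2)%N in Hm2 *; clearbody h.
split.
- move=> j i /andP[Hj1 Hj2] /andP[Hi1 Hi2].
  have Hm0 : (m%:R : rat) != 0 by rewrite pnatr_eq0; lia.
  case: j Hj1 Hj2 => [|c] // _ Hc.
  case: i Hi1 Hi2 => [|[|k]] // _ Hk.
  + rewrite P_1; last by lia.
    splitall.
    all: first [ have -> : (c.+1 + 1 = 2)%N by lia | idtac ].
    all: rewrite ?natrM. all: try (field; done).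
  + rewrite P_form; [|lia|lia]; rewrite /Pform.
    splitall.
    all: first [ have -> : (c.+1 + 1 = k.+3)%N by lia | idtac ].
    all: first [ have -> : (m - c.+1 + 1 = k.+2)%N by lia | idtac ].
    all: rewrite ?natrM -?natr1. all: try (field; done).
- move=> j i /andP[Hj1 Hj2] /andP[Hi1 Hi2].
  case: j Hj1 Hj2 => [|c] // _ Hc.
  rewrite addn1.
  case: i Hi1 Hi2 => [|[|k]] // _ Hk.
  + by rewrite !P_1 //; lia.
  + rewrite !P_form; [|lia|lia|lia|lia]; rewrite /Pform.
    splitall.
    all: ring.
Qed.
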